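(* Let $n\ge5$, $x_1,\dots,x_{n-1}>0$, $\gamma,\delta>0$ with $\gamma\ne1\ne\delta$, $x_0=1$, and let $\mathbf{R}$ be the $n\times n$ matrix with entries $r_{ij}=x_{j-1}/x_{i-1}$ except $r_{12}=\delta x_1$, $r_{21}=1/(\delta x_1)$, $r_{34}=\gamma x_3/x_2$, $r_{43}=x_2/(\gamma x_3)$. Let $\mathbf{w}^{EM}$ be its principal right eigenvector. If $\gamma,\delta>1$, then $w_1^{EM}/w_4^{EM}>x_3$; if $\gamma,\delta<1$, then $w_1^{EM}/w_4^{EM}<x_3$.
   Context: The principal right eigenvector is the positive (Perron) eigenvector belonging to the largest eigenvalue. *)

(* Defs.v *)
From HB Require Import structures.
From mathcomp Require Import all_boot all_order all_algebra.
From mathcomp Require Import reals.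
Set Implicit Arguments. Unset Strict Implicit. Unset Printing Implicit Defensive.
Import Order.TTheory GRing.Theory Num.Theory.
Local Open Scope ring_scope.

(* x_0 = 1, x_k = x k for k >= 1 (indices are the paper's, 1-based for w, r) *)
Definition xext {R : realType} (x : nat -> R) (k : nat) : R :=
  if k == 0%N then 1 else x k.

(* The matrix R of the paper, with 0-based indices i,j : 'I_n:
   paper's r_{(i+1)(j+1)} = x_j / x_i, except the four perturbed entries. *)
Definition EMmat {R : realType} (n : nat) (x : nat -> R) (g d : R) : 'M[R]_n :=
  \matrix_(i < n, j < n)
    if (i == 0%N :> nat) && (j == 1%N :> nat) then d * x 1%N
    else if (i == 1%N :> nat) && (j == 0%N :> nat) then 1 / (d * x 1%N)
    else if (i == 2%N :> nat) && (j == 3%N :> nat) then g * x 3%N / x 2%N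
    else if (i == 3%N :> nat) && (j == 2%N :> nat) then x 2%N / (g * x 3%N)
    else xext x j / xext x i.

Definition principal_right_eigenvector {R : realType} (n : nat)
  (A : 'M[R]_n) (w : 'cV[R]_n) : Prop :=
  (forall i, 0 < w i 0) /\
  exists lam : R, A *m w = lam *: w /\
    forall (mu : R) (v : 'cV[R]_n), v != 0 -> A *m v = mu *: v -> mu <= lam.

(* the k-th (0-based) coordinate of a column vector, 0 if out of range *)
Definition vcoord {R : realType} (n : nat) (w : 'cV[R]_n) (k : nat) : R :=
  if insub k is Some i then w i 0 else 0.

(* Main.v *)
Require Import Defs.
From HB Require Import structures.
From mathcomp Require Import all_boot all_order all_algebra.
From mathcomp Require Import reals.
From mathcomp Require Import zify ring lra.
Import Order.TTheory GRing.Theory Num.Theory.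
Local Open Scope ring_scope.

Theorem mainTheorem20 (R : realType) (n : nat) (x : nat -> R) (g d : R)
  (w : 'cV[R]_n) :
  (5 <= n)%N ->
  (forall k : nat, (1 <= k)%N -> (k < n)%N -> 0 < x k) ->
  0 < g -> 0 < d -> g != 1 -> d != 1 ->
  principal_right_eigenvector (EMmat n x g d) w ->
  ((1 < g -> 1 < d -> x 3%N < vcoord w 0 / vcoord w 3) /\
   (g < 1 -> d < 1 -> vcoord w 0 / vcoord w 3 < x 3%N)).
Proof.
move=> Hn xpos gpos dpos _ _ [wpos [lam [Heig _]]].
have h0 : (0 < n)%N by lia.
have h1 : (1 < n)%N by lia.
have h2 : (2 < n)%N by lia.
have h3 : (3 < n)%N by lia.
pose i0 := Ordinal h0. pose i1 := Ordinal h1.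
pose i2 := Ordinal h2. pose i3 := Ordinal h3.
have vc : forall k (Hk : (k < n)%N), vcoord w k = w (Ordinal Hk) 0.
  by move=> k Hk; rewrite /vcoord insubT.
rewrite (vc 0%N h0) (vc 3%N h3) -/i0 -/i3.
have xe : forall j : 'I_n, 0 < xext x j.
  move=> j; rewrite /xext; case: ifP => // /negbT j0; apply: xpos => //; lia.
have x1 : 0 < x 1%N by apply: xpos.
have x2 : 0 < x 2%N by apply: xpos.
have x3 : 0 < x 3%N by apply: xpos.
have Apos : forall i j, 0 < EMmat n x g d i j.
  move=> i j; rewrite mxE.
  case: ifP => _; first by rewrite mulr_gt0.
  case: ifP => _; first by rewrite divr_gt0 // mulr_gt0.
  case: ifP => _; first by rewrite divr_gt0 // mulr_gt0.
  case: ifP => _; first by rewrite divr_gt0 // mulr_gt0.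
  by rewrite divr_gt0.
have Awpos : forall i, 0 < (EMmat n x g d *m w) i 0.
  move=> i; rewrite mxE (bigD1 i0) //=; apply: ltr_pwDl.
    by rewrite mulr_gt0.
  by apply: sumr_ge0 => j _; rewrite ltW // mulr_gt0.
have lampos : 0 < lam.
  have := Awpos i0; rewrite Heig mxE => H.
  by rewrite -(pmulr_lgt0 _ (wpos i0)).
pose S := \sum_(j < n) xext x j * w j 0.
have row0 : (EMmat n x g d *m w) i0 0 = S + (d * x 1%N - x 1%N) * w i1 0.
  rewrite mxE /S (bigD1 i1) //= [in RHS](bigD1 i1) //=.
  have -> : \sum_(j | j != i1) EMmat n x g d i0 j * w j 0 =
            \sum_(j | j != i1) xext x j * w j 0.
    apply: eq_bigr => j Hj; rewrite mxE /=.
    have -> : (nat_of_ord j == 1%N) = false by apply: contraNF Hj => /eqP e; apply/eqP/val_inj.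
    by rewrite /= /xext /= divr1.
  by rewrite mxE /= /xext /=; ring.
have row3 : x 3%N * (EMmat n x g d *m w) i3 0 = S + (x 2%N / g - x 2%N) * w i2 0.
  rewrite mxE /S (bigD1 i2) //= [in RHS](bigD1 i2) //=.
  have -> : \sum_(j | j != i2) EMmat n x g d i3 j * w j 0 =
            \sum_(j | j != i2) (x 3%N)^-1 * (xext x j * w j 0).
    apply: eq_bigr => j Hj; rewrite mxE /=.
    have -> : (nat_of_ord j == 2%N) = false by apply: contraNF Hj => /eqP e; apply/eqP/val_inj.
    by rewrite /= /xext /=; ring.
  rewrite -mulr_sumr mxE /= /xext /=.
  field; apply/andP; split; rewrite gt_eqF //.
have e0 : (EMmat n x g d *m w) i0 0 = lam * w i0 0 by rewrite Heig mxE.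
have e3 : (EMmat n x g d *m w) i3 0 = lam * w i3 0 by rewrite Heig mxE.
have key : lam * (w i0 0 - x 3%N * w i3 0) =
   (d - 1) * x 1%N * w i1 0 + (x 2%N - x 2%N / g) * w i2 0.
  have : lam * (w i0 0 - x 3%N * w i3 0) = (EMmat n x g d *m w) i0 0 - x 3%N * (EMmat n x g d *m w) i3 0.
    by rewrite e0 e3; ring.
  by move=> ->; rewrite row0 row3; ring.
have w1 := wpos i1. have w2 := wpos i2. have w3 := wpos i3.
split=> Hg Hd.
- rewrite ltr_pdivlMr //.
  have : 0 < lam * (w i0 0 - x 3%N * w i3 0).
    rewrite key; apply: addr_gt0.
      by rewrite !mulr_gt0 // subr_gt0.
    rewrite mulr_gt0 // subr_gt0 ltr_pdivrMr // ltr_pMr //.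
  rewrite pmulr_rgt0 // subr_gt0 mulrC //.
- rewrite ltr_pdivrMr //.
  have : lam * (w i0 0 - x 3%N * w i3 0) < 0.
    have A1 : (d - 1) * x 1%N * w i1 0 < 0.
      by rewrite pmulr_llt0 // pmulr_llt0 // subr_lt0.
    have A2 : (x 2%N - x 2%N / g) * w i2 0 < 0.
      by rewrite pmulr_llt0 // subr_lt0 ltr_pdivlMr // gtr_pMr.
    rewrite key; lra.
  rewrite pmulr_rlt0 // subr_lt0 mulrC //.
Qed.
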